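(* Let $\widehat{\Theta}$ and $\widehat{\Theta}'$ be local $\mathrm{Aut}(F_\infty)$ representations of the same type $\mathcal{L}\in\{A_r\ (r\in\mathbb{Z}_{\ge0}),B,C,D\}$. Then for every oriented link $L$ in $S^3$, $G_{\widehat{\Theta}}(L)\cong G_{\widehat{\Theta}'}(L)$. In particular, if $\tau\in\mathrm{Aut}(F_2)$ is such that the constant sequence $(\tau,\tau,\tau,\dots)$ defines a local $\mathrm{Aut}(F_\infty)$ representation $\widehat{\Theta}_{\tau}$ (a Wada-type representation) of type $\mathcal{L}$, then $G_{\widehat{\Theta}}(L)\cong G_{\widehat{\Theta}_{\tau}}(L)$ for every oriented link $L$.
   Context: $F_2$ is free on $a,b$; $F_n$ is free on $x_1,\dots,x_n$; $B_n$ has standard generators $\sigma_1,\dots,\sigma_{n-1}$ and acts on the right, writing $(x)\phi$. For a word $W$ in $a^{\pm1},b^{\pm1}$, $W(U,V)$ denotes substitution of $U$ for $a$, $V$ for $b$. For $\tau\in\mathrm{Aut}(F_2)$, $T^i(\tau)\in\mathrm{Aut}(F_n)$ fixes $x_j$ ($j\ne i,i+1$) and sends $x_i\mapsto\tau(a)(x_i,x_{i+1})$, $x_{i+1}\mapsto\tau(b)(x_i,x_{i+1})$. A sequence $(\tau_1,\dots,\tau_{n-1})$ in $\mathrm{Aut}(F_2)$ defines a local $\mathrm{Aut}(F_n)$ representation $\Theta_n$ if $\sigma_i\mapsto T^i(\tau_i)$ extends to a homomorphism $B_n\to\mathrm{Aut}(F_n)$. A local $\mathrm{Aut}(F_\infty)$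 representation $\widehat{\Theta}$ is a sequence $(\tau_1,\tau_2,\dots)$ such that for every $n$, $(\tau_1,\dots,\tau_{n-1})$ defines a local $\mathrm{Aut}(F_n)$ representation $\Theta_n$. For $\beta\in B_n$, $G_{\Theta_n}(\beta)=\langle x_1,\dots,x_n\mid (x_i)\Theta_n(\beta)=x_i,\ i=1,\dots,n\rangle$, and $G_{\widehat{\Theta}}(L):=G_{\Theta_n}(\beta)$ for any $n$ and any $\beta\in B_n$ whose closure is $L$ (for the types considered this is well defined up to isomorphism). Natural symmetries on quadruples $(A,B,C,D)$ of reduced words (with $\tau:a\mapsto A,b\mapsto B$, $\kappa:a\mapsto C,b\mapsto D$ automorphisms): Inverse gives the reduced words of $\tau^{-1}(a),\tau^{-1}(b),\kappa^{-1}(a),\kappa^{-1}(b)$; Swap gives $(D^{\sigma},C^{\sigma},B^{\sigma},A^{\sigma})$, $W^\sigma$ interchanging letters $a,b$; Backward gives the four words read backwards. Equivalence up to natural symmetries: related by a composition of these. Labelled list: type $A_r$ ($r\ge0$): $(a^{r}ba^{-r},a,a^{r}ba^{-r},a)$, $(a^{r}ba^{-r},a,a^{r}b^{-1}a^{-r},a^{-1})$, $(a^{r}b^{-1}a^{-r},a^{-1},a^{-r}b^{-1}a^{r},a^{-1})$; type $B$: $(b^{-1},a,b^{-1},a)$, $(b^{-1},a,b,a^{-1})$; type $C$: $(ab^{-1}a,a,ab^{-1}a,a)$, $(ab^{-1}a,a,aba,a^{-1})$, $(aba,a^{-1},aba,a^{-1})$; type $D$: $(a^{-1}b^{-1}a,b^{2}a,a^{-1}b^{-1}a,b^{2}a)$,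 $(aba^{-1},b^{2}a^{-1},a^{-1}b^{-1}a,b^{2}a)$, $(a^{-1}b^{-1}a,b^{2}a,a^{-1}ba,a^{-1}b^{2})$, $(aba^{-1},b^{2}a^{-1},a^{-1}ba,a^{-1}b^{2})$. A local $\mathrm{Aut}(F_\infty)$ representation $(\tau_1,\tau_2,\dots)$ is of type $\mathcal{L}$ if for every $i\ge1$ the quadruple of reduced words $(\tau_i(a),\tau_i(b),\tau_{i+1}(a),\tau_{i+1}(b))$ is equivalent up to natural symmetries to a listed quadruple of type $\mathcal{L}$. *)

(* Defs.v *)
From mathcomp Require Import all_boot.

Set Implicit Arguments.
Unset Strict Implicit.
Unset Printing Implicit Defensive.

(* a letter (j, true) is x_j, (j, false) is x_j^{-1} *)
Definition letter (n : nat) := ('I_n * bool)%type.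
Definition word (n : nat) := seq (letter n).

Definition inv_letter n (l : letter n) : letter n := (l.1, ~~ l.2).
Definition inv_word n (w : word n) : word n := rev (map (@inv_letter n) w).
Definition gen n (j : 'I_n) : word n := [:: (j, true)].

(* Group presented by generators 'I_n and relators R: the congruence on words
   generated by free cancellation and r = 1 for r in R. With R = [::] this is
   equality in the free group F_n. *)
Inductive pequiv (n : nat) (R : seq (word n)) : word n -> word n -> Prop :=
| pe_refl w : pequiv R w w
| pe_sym u v : pequiv R u v -> pequiv R v u
| pe_trans u v w : pequiv R u v -> pequiv R v w -> pequiv R u w
| pe_cat u u' v v' : pequiv R u u' -> pequiv R v v' -> pequiv R (u ++ v) (u' ++ v')
| pe_cancel (l : letter n) : pequiv R [:: l; inv_letter l] [::]
| pe_rel r : r \in R -> pequiv R r [::].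

Definition free_equiv n (u v : word n) := pequiv (@nil (word n)) u v.

Definition reduce n (w : word n) : word n :=
  foldr (fun l acc => if acc is l' :: acc'
                      then (if l' == inv_letter l then acc' else l :: acc)
                      else [:: l]) [::] w.

Definition subst n m (f : 'I_n -> word m) (w : word n) : word m :=
  flatten [seq (if l.2 then f l.1 else inv_word (f l.1)) | l <- w].

Definition iso_pres n m (R : seq (word n)) (S : seq (word m)) : Prop :=
  exists h : word n -> word m,
    [/\ (forall u v, pequiv R u v -> pequiv S (h u) (h v)),
        (forall u v, pequiv S (h (u ++ v)) (h u ++ h v)),
        (forall u v, pequiv S (h u) (h v) -> pequiv R u v) &
        (forall w, exists u, pequiv S (h u) w)].

Definition ord_a : 'I_2 := @Ordinal 2 0 isT.
Definition ord_b : 'I_2 := @Ordinal 2 1 isT.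
Definition la : letter 2 := (ord_a, true).
Definition lai : letter 2 := (ord_a, false).
Definition lb : letter 2 := (ord_b, true).
Definition lbi : letter 2 := (ord_b, false).

(* an endomorphism tau of F_2 given by the words (tau(a), tau(b)) *)
Definition aut2 := (word 2 * word 2)%type.
Definition pair2 m (A B : word m) : 'I_2 -> word m :=
  fun k => if val k == 0 then A else B.

Definition inverse_aut2 (t s : aut2) : Prop :=
  forall k : 'I_2,
    free_equiv (subst (pair2 s.1 s.2) (pair2 t.1 t.2 k)) (gen k) /\
    free_equiv (subst (pair2 t.1 t.2) (pair2 s.1 s.2 k)) (gen k).

Definition xw n (k : nat) : word n :=
  [seq ((j, true) : letter n) | j <- enum 'I_n & val j == k].

Definition Tloc n (i : nat) (t : aut2) : 'I_n -> word n :=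
  fun j => if val j == i then subst (fun k : 'I_2 => xw n (i + val k)) t.1
           else if val j == i.+1 then subst (fun k : 'I_2 => xw n (i + val k)) t.2
           else gen j.

(* ---------- braid words; (i, true) = sigma_{i+1}, (i, false) = its inverse ---------- *)
Definition valid_braid (n : nat) (beta : seq (nat * bool)) :=
  all (fun s => s.1.+1 < n) beta.

Inductive bequiv (n : nat) : seq (nat * bool) -> seq (nat * bool) -> Prop :=
| be_refl w : bequiv n w w
| be_sym u v : bequiv n u v -> bequiv n v u
| be_trans u v w : bequiv n u v -> bequiv n v w -> bequiv n u w
| be_cat u u' v v' : bequiv n u u' -> bequiv n v v' -> bequiv n (u ++ v) (u' ++ v')
| be_cancel i b : i.+1 < n -> bequiv n [:: (i, b); (i, ~~ b)] [::]
| be_braid i : i.+2 < n ->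
    bequiv n [:: (i, true); (i.+1, true); (i, true)] [:: (i.+1, true); (i, true); (i.+1, true)]
| be_comm i j : j.+1 < n -> i.+1 < j ->
    bequiv n [:: (i, true); (j, true)] [:: (j, true); (i, true)].

(* right action (w)Theta_n(beta): sigma_i acts by T^i(tau_i), sigma_i^{-1} by
   T^i(tau_i^{-1}); tau is 0-based (tau k = tau_{k+1}), taui k = tau_{k+1}^{-1} *)
Definition act n (tau taui : nat -> aut2) (beta : seq (nat * bool)) (w : word n) : word n :=
  foldl (fun (w : word n) (s : nat * bool) => subst (@Tloc n s.1 (if s.2 then tau s.1 else taui s.1)) w) w beta.

(* (tau_1,...,tau_{n-1}) defines a local Aut(F_n) representation:
   sigma_i |-> T^i(tau_i) extends to a homomorphism B_n -> Aut(F_n) *)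
Definition local_rep n (tau taui : nat -> aut2) : Prop :=
  forall beta beta', valid_braid n beta -> valid_braid n beta' -> bequiv n beta beta' ->
    forall j : 'I_n, free_equiv (act tau taui beta (gen j)) (act tau taui beta' (gen j)).

Definition local_inf (tau taui : nat -> aut2) : Prop := forall n, local_rep n tau taui.

(* relators of G_Theta(beta) = < x_j | (x_j)Theta(beta) = x_j > *)
Definition Gpres n (tau taui : nat -> aut2) (beta : seq (nat * bool)) : seq (word n) :=
  [seq act tau taui beta (gen j) ++ [:: inv_letter (j, true)] | j <- enum 'I_n].

Definition quad := (aut2 * aut2)%type.

Definition reducedw n (w : word n) := reduce w = w.

Definition reducedq (Q : quad) : Prop :=
  [/\ reducedw Q.1.1, reducedw Q.1.2, reducedw Q.2.1 & reducedw Q.2.2].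

Definition inv_step (Q Q' : quad) : Prop :=
  [/\ reducedq Q, reducedq Q', inverse_aut2 Q.1 Q'.1 & inverse_aut2 Q.2 Q'.2].

Definition swap_letter (l : letter 2) : letter 2 :=
  (if val l.1 == 0 then ord_b else ord_a, l.2).
Definition swapw (w : word 2) : word 2 := map swap_letter w.
Definition swapQ (Q : quad) : quad :=
  ((swapw Q.2.2, swapw Q.2.1), (swapw Q.1.2, swapw Q.1.1)).
Definition backQ (Q : quad) : quad :=
  ((rev Q.1.1, rev Q.1.2), (rev Q.2.1, rev Q.2.2)).

Definition sym_step (Q Q' : quad) : Prop :=
  inv_step Q Q' \/ Q' = swapQ Q \/ Q' = backQ Q.

Inductive sym_equiv : quad -> quad -> Prop :=
| se_refl Q : sym_equiv Q Q
| se_step Q1 Q2 Q3 : sym_step Q1 Q2 -> sym_equiv Q2 Q3 -> sym_equiv Q1 Q3.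

Inductive ltype := TA of nat | TB | TC | TD.

Definition cnj (r : nat) (w : word 2) : word 2 := nseq r la ++ w ++ nseq r lai.
Definition cnji (r : nat) (w : word 2) : word 2 := nseq r lai ++ w ++ nseq r la.

Definition listed (L : ltype) : seq quad :=
  match L with
  | TA r => [:: ((cnj r [:: lb], [:: la]), (cnj r [:: lb], [:: la]));
                ((cnj r [:: lb], [:: la]), (cnj r [:: lbi], [:: lai]));
                ((cnj r [:: lbi], [:: lai]), (cnji r [:: lbi], [:: lai]))]
  | TB => [:: (([:: lbi], [:: la]), ([:: lbi], [:: la]));
              (([:: lbi], [:: la]), ([:: lb], [:: lai]))]
  | TC => [:: (([:: la; lbi; la], [:: la]), ([:: la; lbi; la], [:: la]));
              (([:: la; lbi; la], [:: la]), ([:: la; lb; la], [:: lai]));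
              (([:: la; lb; la], [:: lai]), ([:: la; lb; la], [:: lai]))]
  | TD => [:: (([:: lai; lbi; la], [:: lb; lb; la]), ([:: lai; lbi; la], [:: lb; lb; la]));
              (([:: la; lb; lai], [:: lb; lb; lai]), ([:: lai; lbi; la], [:: lb; lb; la]));
              (([:: lai; lbi; la], [:: lb; lb; la]), ([:: lai; lb; la], [:: lai; lb; lb]));
              (([:: la; lb; lai], [:: lb; lb; lai]), ([:: lai; lb; la], [:: lai; lb; lb]))]
  end.

Definition has_type (L : ltype) (tau : nat -> aut2) : Prop :=
  forall i, exists2 Q, Q \in listed L &
    sym_equiv ((reduce (tau i).1, reduce (tau i).2),
               (reduce (tau i.+1).1, reduce (tau i.+1).2)) Q.

(* Main.v *)
Require Import Defs.
From mathcomp Require Import all_boot zify.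
From Stdlib Require Import Setoid Morphisms FunctionalExtensionality.
Set Implicit Arguments. Unset Strict Implicit. Unset Printing Implicit Defensive.

Section Free.
Variable n : nat.
Implicit Types (u v w : word n) (R : seq (word n)).

Lemma inv_letterK : involutive (@inv_letter n).
Proof. by case=> j b; rewrite /inv_letter /= negbK. Qed.

Lemma inv_word_cat u v : inv_word (u ++ v) = inv_word v ++ inv_word u.
Proof. by rewrite /inv_word map_cat rev_cat. Qed.

Lemma inv_wordK : involutive (@inv_word n).
Proof. by move=> w; rewrite /inv_word map_rev revK (mapK inv_letterK). Qed.

Lemma inv_word_cons l w : inv_word (l :: w) = inv_word w ++ [:: inv_letter l].
Proof. by rewrite /inv_word /= rev_cons cats1. Qed.

Lemma inv_word_nil : inv_word (@nil (letter n)) = [::].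
Proof. by []. Qed.

Global Instance pequiv_Equiv R : Equivalence (pequiv R).
Proof. constructor; [move=> x; exact: pe_refl | move=> x y; exact: pe_sym | move=> x y z; exact: pe_trans]. Qed.

Global Instance cat_Proper R : Proper (pequiv R ==> pequiv R ==> pequiv R) (@cat (letter n)).
Proof. by move=> u u' Hu v v' Hv; apply: pe_cat. Qed.

Global Instance cons_Proper R l : Proper (pequiv R ==> pequiv R) (cons l).
Proof. by move=> u u' Hu; rewrite -(cat1s l u) -(cat1s l u'); apply: pe_cat => //; apply: pe_refl. Qed.

Lemma cancelL R l : pequiv R [:: l; inv_letter l] [::].
Proof. exact: pe_cancel. Qed.

Lemma cancelR R l : pequiv R [:: inv_letter l; l] [::].
Proof. by rewrite -{2}(inv_letterK l); apply: pe_cancel. Qed.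

Lemma cancel_w R w : pequiv R (w ++ inv_word w) [::].
Proof.
elim: w => [|l w IH] /=; first by reflexivity.
rewrite inv_word_cons catA; setoid_rewrite IH; apply: cancelL.
Qed.

Lemma cancel_w' R w : pequiv R (inv_word w ++ w) [::].
Proof. rewrite -{2}(inv_wordK w); apply: cancel_w. Qed.

Lemma free_pequiv R u v : free_equiv u v -> pequiv R u v.
Proof.
elim=> //; first by move=> *; reflexivity.
- by move=> *; symmetry.
- by move=> *; etransitivity; eauto.
- by move=> *; apply: pe_cat.
- by move=> *; apply: pe_cancel.
Qed.

Global Instance free_sub R : subrelation (@free_equiv n) (pequiv R).
Proof. by move=> u v; apply: free_pequiv. Qed.

Global Instance free_Equiv : Equivalence (@free_equiv n).
Proof. exact: pequiv_Equiv. Qed.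
Global Instance cat_Proper_f : Proper (@free_equiv n ==> @free_equiv n ==> @free_equiv n) (@cat (letter n)).
Proof. exact: cat_Proper. Qed.
Global Instance cons_Proper_f l : Proper (@free_equiv n ==> @free_equiv n) (cons l).
Proof. exact: cons_Proper. Qed.

Global Instance inv_Proper R : Proper (pequiv R ==> pequiv R) (@inv_word n).
Proof.
move=> u v H.
transitivity (inv_word u ++ (v ++ inv_word v)).
  by setoid_rewrite cancel_w; rewrite cats0; reflexivity.
transitivity (inv_word u ++ (u ++ inv_word v)).
  by apply: pe_cat; [reflexivity | apply: pe_cat; [symmetry; exact H | reflexivity]].
rewrite catA; setoid_rewrite cancel_w'; reflexivity.
Qed.

Global Instance inv_Proper_f : Proper (@free_equiv n ==> @free_equiv n) (@inv_word n).
Proof. exact: inv_Proper. Qed.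
End Free.

Section Subst.

Lemma subst_cat n m (f : 'I_n -> word m) u v : subst f (u ++ v) = subst f u ++ subst f v.
Proof. by rewrite /subst map_cat flatten_cat. Qed.

Lemma subst_nil n m (f : 'I_n -> word m) : subst f [::] = [::].
Proof. by []. Qed.

Lemma subst_cons n m (f : 'I_n -> word m) l w :
  subst f (l :: w) = (if l.2 then f l.1 else inv_word (f l.1)) ++ subst f w.
Proof. by []. Qed.

Lemma subst_inv n m (f : 'I_n -> word m) w : subst f (inv_word w) = inv_word (subst f w).
Proof.
elim: w => [|[j b] w IH] //.
rewrite inv_word_cons subst_cat IH subst_cons inv_word_cat /=.
by case: b => /=; rewrite ?inv_wordK cats0.
Qed.

Lemma subst_comp n m p (f : 'I_m -> word p) (g : 'I_n -> word m) w :
  subst f (subst g w) = subst (fun j => subst f (g j)) w.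
Proof.
elim: w => [|[j b] w IH] //; rewrite subst_cons subst_cat IH subst_cons /=.
by case: b => //; rewrite subst_inv.
Qed.

Lemma subst_gen n w : subst (@gen n) w = w.
Proof. by elim: w => [|[j b] w IH] //; rewrite subst_cons IH; case: b. Qed.

Lemma subst_gen1 n m (f : 'I_n -> word m) j : subst f (gen j) = f j.
Proof. by rewrite /gen subst_cons /= cats0. Qed.

Lemma subst_resp n m (f : 'I_n -> word m) R S :
  (forall r, r \in R -> pequiv S (subst f r) [::]) ->
  forall u v, pequiv R u v -> pequiv S (subst f u) (subst f v).
Proof.
move=> hf u v; elim.
- by move=> *; reflexivity.
- by move=> *; symmetry.
- by move=> *; etransitivity; eauto.
- by move=> u0 u' v0 v' _ H1 _ H2; rewrite !subst_cat; apply: pe_cat.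
- move=> [j b]; rewrite subst_cons /= subst_cons /= cats0.
  by case: b => /=; rewrite ?inv_wordK; [apply: cancel_w | apply: cancel_w'].
- by move=> r Hr; apply: hf.
Qed.

Lemma subst_free n m (f : 'I_n -> word m) u v :
  free_equiv u v -> free_equiv (subst f u) (subst f v).
Proof. by apply: subst_resp. Qed.

Lemma subst_respf n m (f g : 'I_n -> word m) S :
  (forall j, pequiv S (f j) (g j)) -> forall w, pequiv S (subst f w) (subst g w).
Proof.
move=> H; elim=> [|[j b] w IH]; first by reflexivity.
rewrite !subst_cons; apply: pe_cat => //.
by case: b => /=; [apply: H | apply: inv_Proper; apply: H].
Qed.

End Subst.

Section NF.
Variable n : nat.
Implicit Types (u v w acc : word n).

Definition step (l : letter n) acc : word n :=
  if acc is l' :: acc' then (if l' == inv_letter l then acc' else l :: acc) else [:: l].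

Fixpoint redb (w : word n) : bool :=
  if w is l :: w' then (if w' is l' :: _ then l' != inv_letter l else true) && redb w' else true.

Definition actw u acc := foldr step acc u.

Lemma reduce_actw u : reduce u = actw u [::].
Proof. by []. Qed.

Lemma redb_step l acc : redb acc -> redb (step l acc).
Proof.
case: acc => [|l' acc] //= /andP [H1 H2].
case: ifP => [_ | /negbT Hne] /=; [done | by rewrite Hne H1 H2].
Qed.

Lemma step_inv l acc : redb acc -> step l (step (inv_letter l) acc) = acc.
Proof.
case: acc => [|l' acc] /=; first by rewrite eqxx.
move=> /andP [H1 H2].
rewrite inv_letterK; case: eqP => [Heq | Hne] /=.
  subst l'; case: acc H1 H2 => [|l'' acc] //= H1 _.
  by rewrite (negbTE H1).
by rewrite eqxx.
Qed.

Lemma redb_actw u acc : redb acc -> redb (actw u acc).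
Proof. by elim: u => [|l u IH] //= H; apply: redb_step; apply: IH. Qed.

Lemma actw_cat u v acc : actw (u ++ v) acc = actw u (actw v acc).
Proof. by rewrite /actw foldr_cat. Qed.

Lemma nf_actw u v : free_equiv u v -> forall acc, redb acc -> actw u acc = actw v acc.
Proof.
elim=> //.
- by move=> u0 v0 _ IH acc H; rewrite IH.
- by move=> u0 v0 w0 _ IH1 _ IH2 acc H; rewrite IH1 // IH2.
- move=> u0 u' v0 v' _ IH1 _ IH2 acc H.
  rewrite !actw_cat IH2 // IH1 //; exact: redb_actw.
- move=> l acc H; rewrite /actw /=.
  by rewrite step_inv.
Qed.

Lemma nf u v : free_equiv u v -> reduce u = reduce v.
Proof. by move=> H; rewrite !reduce_actw; apply: nf_actw. Qed.

Lemma step_equiv l acc : free_equiv (step l acc) (l :: acc).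
Proof.
case: acc => [|l' acc] /=; first by reflexivity.
case: eqP => [-> | _]; last by reflexivity.
rewrite -(cat1s l (inv_letter l :: acc)) -(cat1s (inv_letter l) acc) catA.
setoid_rewrite (cancelL [::] l); reflexivity.
Qed.

Lemma reduce_equiv w : free_equiv (reduce w) w.
Proof.
elim: w => [|l w IH] //=; first by reflexivity.
setoid_rewrite (step_equiv l); setoid_rewrite IH; reflexivity.
Qed.

Lemma redb_reduce w : redb (reduce w).
Proof. by rewrite reduce_actw; apply: redb_actw. Qed.

Lemma reduce_id w : redb w -> reduce w = w.
Proof.
elim: w => [|l w IH] // /andP [H1 H2].
have ->: reduce (l :: w) = step l (reduce w) by [].
rewrite IH //.
by case: w H1 {IH H2} => [|l' w] //= H; rewrite (negbTE H).
Qed.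

Lemma reducedP w : reducedw w <-> redb w.
Proof. by split=> [<- | H]; [apply: redb_reduce | apply: reduce_id]. Qed.

Lemma free_eq_red u v : free_equiv u v -> reducedw u -> reducedw v -> u = v.
Proof. by move=> H Hu Hv; rewrite -Hu -Hv; apply: nf. Qed.

Lemma red_free u v : reduce u = reduce v -> free_equiv u v.
Proof. move=> H; setoid_rewrite <- (reduce_equiv u); rewrite H; apply: reduce_equiv. Qed.

End NF.

Definition compw n m p (f : 'I_m -> word p) (g : 'I_n -> word m) : 'I_n -> word p :=
  fun j => subst f (g j).
Definition feqf n m (f g : 'I_n -> word m) := forall j, free_equiv (f j) (g j).

Section Comp.
Variables n m p q : nat.

Lemma cwA (f : 'I_p -> word q) (g : 'I_m -> word p) (h : 'I_n -> word m) :
  compw f (compw g h) = compw (compw f g) h.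
Proof. by apply: functional_extensionality => j; rewrite /compw subst_comp. Qed.

Lemma comp_genl (f : 'I_n -> word m) : compw (@gen m) f = f.
Proof. by apply: functional_extensionality => j; rewrite /compw subst_gen. Qed.

Lemma comp_genr (f : 'I_n -> word m) : compw f (@gen n) = f.
Proof. by apply: functional_extensionality => j; rewrite /compw subst_gen1. Qed.

Lemma comp_feq (f f' : 'I_m -> word p) (g g' : 'I_n -> word m) :
  feqf f f' -> feqf g g' -> feqf (compw f g) (compw f' g').
Proof.
move=> Hf Hg j; rewrite /compw.
transitivity (subst f (g' j)); first exact: subst_free.
exact: subst_respf.
Qed.

Lemma feq_refl (f : 'I_n -> word m) : feqf f f.
Proof. by move=> j; reflexivity. Qed.
Lemma feq_sym (f g : 'I_n -> word m) : feqf f g -> feqf g f.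
Proof. by move=> H j; symmetry. Qed.
Lemma feq_trans (f g h : 'I_n -> word m) : feqf f g -> feqf g h -> feqf f h.
Proof. by move=> H1 H2 j; etransitivity. Qed.
Lemma feq_eq (f g : 'I_n -> word m) : f =1 g -> feqf f g.
Proof. by move=> H j; rewrite H; reflexivity. Qed.

End Comp.

Definition cnjg n (Phi Phi' psi chi : 'I_n -> word n) :=
  [/\ feqf (compw chi psi) (@gen n), feqf (compw psi chi) (@gen n) &
      feqf (compw psi Phi') (compw Phi psi)].

Section Conj.
Variable n : nat.
Implicit Types (Phi psi chi : 'I_n -> word n).

Lemma conj_sym Phi Phi' psi chi : cnjg Phi Phi' psi chi -> cnjg Phi' Phi chi psi.
Proof.
case=> H1 H2 H3; split => //.
apply: (feq_trans (g := compw chi (compw Phi (compw psi chi)))).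
  apply: comp_feq; first exact: feq_refl.
  apply: feq_sym; apply: (feq_trans (g := compw Phi (@gen n))).
    by apply: comp_feq; [exact: feq_refl | exact: H2].
  by rewrite comp_genr; apply: feq_refl.
apply: (feq_trans (g := compw (compw chi (compw psi Phi')) chi)).
  apply: (feq_trans (g := compw (compw chi (compw Phi psi)) chi)).
    by rewrite !cwA; apply: feq_refl.
  apply: comp_feq; last exact: feq_refl.
  by apply: comp_feq; [exact: feq_refl | apply: feq_sym].
apply: (feq_trans (g := compw (compw (compw chi psi) Phi') chi)).
  by rewrite !cwA; apply: feq_refl.
apply: (feq_trans (g := compw (compw (@gen n) Phi') chi)).
  apply: comp_feq; last exact: feq_refl.
  by apply: comp_feq; [exact: H1 | exact: feq_refl].
by rewrite comp_genl; apply: feq_refl.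
Qed.

Lemma conj_trans Phi Phi' Phi'' psi chi psi' chi' :
  cnjg Phi Phi' psi chi -> cnjg Phi' Phi'' psi' chi' ->
  cnjg Phi Phi'' (compw psi psi') (compw chi' chi).
Proof.
case=> H1 H2 H3 [K1 K2 K3]; split.
- apply: (feq_trans (g := compw chi' (compw (compw chi psi) psi'))).
    by rewrite !cwA; apply: feq_refl.
  apply: (feq_trans (g := compw chi' (compw (@gen n) psi'))).
    by apply: comp_feq; [exact: feq_refl | apply: comp_feq; [exact: H1 | exact: feq_refl]].
  by rewrite comp_genl.
- apply: (feq_trans (g := compw psi (compw (compw psi' chi') chi))).
    by rewrite !cwA; apply: feq_refl.
  apply: (feq_trans (g := compw psi (compw (@gen n) chi))).
    by apply: comp_feq; [exact: feq_refl | apply: comp_feq; [exact: K2 | exact: feq_refl]].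
  by rewrite comp_genl.
- apply: (feq_trans (g := compw psi (compw psi' Phi''))).
    by rewrite !cwA; apply: feq_refl.
  apply: (feq_trans (g := compw psi (compw Phi' psi'))).
    by apply: comp_feq; [exact: feq_refl | exact: K3].
  apply: (feq_trans (g := compw (compw psi Phi') psi')).
    by rewrite !cwA; apply: feq_refl.
  apply: (feq_trans (g := compw (compw Phi psi) psi')).
    by apply: comp_feq; [exact: H3 | exact: feq_refl].
  by rewrite !cwA; apply: feq_refl.
Qed.

Lemma conj_refl Phi : cnjg Phi Phi (@gen n) (@gen n).
Proof.
split; apply: feq_eq => j; rewrite /compw ?subst_gen1 ?subst_gen //.
Qed.

Definition Rel Phi : seq (word n) := [seq Phi j ++ [:: inv_letter (j, true)] | j <- enum 'I_n].

Lemma rel_gen Phi j : pequiv (Rel Phi) (Phi j) (gen j).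
Proof.
have Hr : pequiv (Rel Phi) (Phi j ++ [:: inv_letter (j, true)]) [::].
  by apply: pe_rel; apply: map_f; rewrite mem_enum.
transitivity (Phi j ++ ([:: inv_letter (j, true)] ++ [:: (j, true)])).
  rewrite -{1}(cats0 (Phi j)); apply: pe_cat; first reflexivity.
  symmetry; exact: cancelR.
rewrite catA; setoid_rewrite Hr; reflexivity.
Qed.

Lemma coinv Phi w : pequiv (Rel Phi) (subst Phi w) w.
Proof.
rewrite -{2}(subst_gen w); apply: subst_respf => j; exact: rel_gen.
Qed.

Lemma transfer Phi Phi' psi chi : cnjg Phi Phi' psi chi ->
  forall u v, pequiv (Rel Phi) u v -> pequiv (Rel Phi') (subst chi u) (subst chi v).
Proof.
move=> Hc; have [H1 H2 H3] := conj_sym Hc.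
apply: subst_resp => r /mapP [j _ ->].
rewrite subst_cat subst_cons /= cats0.
have E : free_equiv (subst chi (Phi j)) (subst Phi' (chi j)) by apply: H3.
transitivity (subst Phi' (chi j) ++ inv_word (chi j)).
  by apply: pe_cat; [apply: free_pequiv | reflexivity].
setoid_rewrite (coinv Phi' (chi j)); exact: cancel_w.
Qed.

Lemma conj_iso Phi Phi' psi chi : cnjg Phi Phi' psi chi -> iso_pres (Rel Phi) (Rel Phi').
Proof.
move=> Hc; have [H1 H2 H3] := Hc.
have Hc' := conj_sym Hc.
exists (subst chi); split.
- exact: transfer Hc.
- by move=> u v; rewrite subst_cat; reflexivity.
- move=> u v H.
  have K := transfer Hc' H.
  have E : forall w, free_equiv (subst psi (subst chi w)) w.
    move=> w; rewrite subst_comp -{2}(subst_gen w); apply: subst_respf => j; exact: H2.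
  transitivity (subst psi (subst chi u)); first by symmetry; apply: free_pequiv.
  transitivity (subst psi (subst chi v)) => //.
  exact: free_pequiv.
- move=> w; exists (subst psi w).
  apply: free_pequiv; rewrite subst_comp -{2}(subst_gen w); apply: subst_respf => j; exact: H1.
Qed.

End Conj.

Definition Phi n (tau taui : nat -> aut2) beta : 'I_n -> word n :=
  fun j => act tau taui beta (gen j).
Definition Tl n (tau taui : nat -> aut2) (s : nat * bool) : 'I_n -> word n :=
  @Tloc n s.1 (if s.2 then tau s.1 else taui s.1).

Arguments Phi : clear implicits.
Arguments Tl : clear implicits.
Section Act.
Variables (n : nat) (tau taui : nat -> aut2).

Lemma act_subst beta (w : word n) :
  act tau taui beta w = subst (Phi n tau taui beta) w.
Proof.
elim: beta w => [|s beta IH] w; first by rewrite /Phi /act /= subst_gen.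
have E : Phi n tau taui (s :: beta) = compw (Phi n tau taui beta) (Tl n tau taui s).
  apply: functional_extensionality => j.
  by rewrite /Phi {1}/act /= -/(act _ _ _ _) IH subst_gen1.
by rewrite E /act /= -/(act _ _ _ _) IH subst_comp.
Qed.

Lemma Phi_cons s beta :
  Phi n tau taui (s :: beta) = compw (Phi n tau taui beta) (Tl n tau taui s).
Proof.
apply: functional_extensionality => j.
by rewrite /Phi {1}/act /= -/(act _ _ _ _) act_subst subst_gen1.
Qed.

Lemma Phi_nil : Phi n tau taui [::] = @gen n.
Proof. by []. Qed.

Lemma Phi_cat b1 b2 :
  Phi n tau taui (b1 ++ b2) = compw (Phi n tau taui b2) (Phi n tau taui b1).
Proof.
elim: b1 => [|s b1 IH] /=; first by rewrite Phi_nil comp_genr.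
by rewrite !Phi_cons IH cwA.
Qed.

End Act.

Lemma Gpres_Rel n tau taui beta : Gpres n tau taui beta = Rel (Phi n tau taui beta).
Proof. by []. Qed.

Definition emb n i : 'I_2 -> word n := fun k => xw n (i + val k).

Arguments emb : clear implicits.
Lemma xw_gen n k (H : k < n) : xw n k = gen (Ordinal H).
Proof.
rewrite /xw /gen.
have -> : [seq j <- enum 'I_n | val j == k] = [:: Ordinal H].
  rewrite -(filter_pred1_uniq (enum_uniq 'I_n) (mem_enum _ (Ordinal H))).
  by apply: eq_filter => j /=; apply/eqP/eqP => [Hj | ->] //; apply: val_inj.
by [].
Qed.

Lemma I2_cases (k : 'I_2) : k = ord_a \/ k = ord_b.
Proof.
by case: k => [[|[|k]] Hk] //; [left | right]; apply: val_inj.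
Qed.

Definition P2 (t : aut2) : 'I_2 -> word 2 := pair2 t.1 t.2.
Definition ofP (f : 'I_2 -> word 2) : aut2 := (f ord_a, f ord_b).

Lemma P2_ofP f : P2 (ofP f) = f.
Proof.
by apply: functional_extensionality => k; case: (I2_cases k) => ->.
Qed.

Lemma ofP_P2 t : ofP (P2 t) = t.
Proof. by case: t. Qed.

Lemma Tloc_emb n i (t : aut2) : i.+1 < n ->
  compw (@Tloc n i t) (emb n i) = compw (emb n i) (P2 t).
Proof.
move=> Hi; apply: functional_extensionality => k.
case: (I2_cases k) => -> {k}; rewrite /compw /emb /=.
- rewrite addn0 (xw_gen (ltnW Hi)) subst_gen1 /Tloc /= eqxx.
  by rewrite /P2 /pair2 /=.
- rewrite addn1 (xw_gen Hi) subst_gen1 /Tloc /= eqxx.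
  by rewrite (gtn_eqF (ltnSn i)) /P2 /pair2 /=.
Qed.

Definition sgn n (E : 'I_n -> bool) : 'I_n -> word n := fun j => [:: (j, E j)].

Lemma sgn_inv n (E : 'I_n -> bool) : compw (sgn E) (sgn E) = @gen n.
Proof.
apply: functional_extensionality => j; rewrite /compw /sgn subst_cons /= cats0.
by case: (E j).
Qed.

Lemma subst_sgn1 n m (f : 'I_n -> word m) (E : 'I_n -> bool) j :
  subst f (sgn E j) = if E j then f j else inv_word (f j).
Proof. by rewrite /sgn subst_cons /= cats0. Qed.

Definition dsig (x y : bool) : 'I_2 -> word 2 := sgn (fun k : 'I_2 => if val k == 0 then x else y).
Definition sgnE n (E : nat -> bool) : 'I_n -> word n := sgn (fun j : 'I_n => E (val j)).

Arguments sgnE : clear implicits.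
Lemma sgn_emb n i (E : nat -> bool) : i.+1 < n ->
  compw (sgnE n E) (emb n i) = compw (emb n i) (dsig (E i) (E i.+1)).
Proof.
move=> Hi; apply: functional_extensionality => k.
case: (I2_cases k) => -> {k}; rewrite /compw /emb /= ?addn0 ?addn1.
- rewrite (xw_gen (ltnW Hi)) subst_gen1 /dsig subst_sgn1 /= addn0 (xw_gen (ltnW Hi)).
  by rewrite /sgnE /sgn /=; case: (E i).
- rewrite (xw_gen Hi) subst_gen1 /dsig subst_sgn1 /= addn1 (xw_gen Hi).
  by rewrite /sgnE /sgn /=; case: (E i.+1).
Qed.

Definition gauge x y (t : aut2) : aut2 := ofP (compw (dsig x y) (compw (P2 t) (dsig x y))).

Lemma P2_gauge x y t : P2 (gauge x y t) = compw (dsig x y) (compw (P2 t) (dsig x y)).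
Proof. by rewrite /gauge P2_ofP. Qed.

Definition feq2 (t s : aut2) := feqf (P2 t) (P2 s).

Lemma gauge_loc x y (u u0 : aut2) : feq2 u (gauge x y u0) ->
  feqf (compw (dsig x y) (P2 u0)) (compw (P2 u) (dsig x y)).
Proof.
move=> H; rewrite /feq2 P2_gauge in H.
apply: feq_sym; apply: (feq_trans (g := compw (compw (dsig x y) (compw (P2 u0) (dsig x y))) (dsig x y))).
  by apply: comp_feq => //; apply: feq_refl.
by rewrite -!cwA sgn_inv comp_genr; apply: feq_refl.
Qed.

Lemma Tloc_far n i t (j : 'I_n) : val j != i -> val j != i.+1 -> @Tloc n i t j = gen j.
Proof. by rewrite /Tloc => /negbTE -> /negbTE ->. Qed.

Lemma gauge_Tloc n i (E : nat -> bool) (u u0 : aut2) : i.+1 < n ->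
  feq2 u (gauge (E i) (E i.+1) u0) ->
  feqf (compw (sgnE n E) (@Tloc n i u0)) (compw (@Tloc n i u) (sgnE n E)).
Proof.
move=> Hi Hu.
have Hl := gauge_loc Hu.
have E1 : compw (compw (sgnE n E) (@Tloc n i u0)) (emb n i) =
          compw (emb n i) (compw (dsig (E i) (E i.+1)) (P2 u0)).
  by rewrite -cwA Tloc_emb // cwA sgn_emb // -cwA.
have E2 : compw (compw (@Tloc n i u) (sgnE n E)) (emb n i) =
          compw (emb n i) (compw (P2 u) (dsig (E i) (E i.+1))).
  by rewrite -cwA sgn_emb // cwA Tloc_emb // -cwA.
have key : feqf (compw (compw (sgnE n E) (@Tloc n i u0)) (emb n i))
                (compw (compw (@Tloc n i u) (sgnE n E)) (emb n i)).
  by rewrite E1 E2; apply: comp_feq; [apply: feq_refl | exact: Hl].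
move=> j.
case: (eqVneq (val j) i) => [hj | hj1].
  have -> : j = Ordinal (ltnW Hi) by apply: val_inj.
  move: (key ord_a); rewrite /compw /emb /= addn0 (xw_gen (ltnW Hi)) !subst_gen1.
  by [].
case: (eqVneq (val j) i.+1) => [hj | hj2].
  have -> : j = Ordinal Hi by apply: val_inj.
  move: (key ord_b); rewrite /compw /emb /= addn1 (xw_gen Hi) !subst_gen1.
  by [].
rewrite /compw (Tloc_far _ hj1 hj2) subst_gen1 /sgnE subst_sgn1 (Tloc_far _ hj1 hj2).
by rewrite /sgn /gen; case: (E (val j)); reflexivity.
Qed.

Definition flipb n (beta : seq (nat * bool)) : seq (nat * bool) :=
  [seq (n - s.1.+2, s.2) | s <- beta].

Section Braid.
Variable n : nat.
Notation bq := (bequiv n).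

Global Instance bq_Equiv : Equivalence bq.
Proof. constructor; [move=> x; exact: be_refl | move=> x y; exact: be_sym | move=> x y z; exact: be_trans]. Qed.

Global Instance bq_cat : Proper (bq ==> bq ==> bq) (@cat (nat * bool)).
Proof. by move=> u u' Hu v v' Hv; apply: be_cat. Qed.

Lemma bctx p u u' s : bq u u' -> bq (p ++ u ++ s) (p ++ u' ++ s).
Proof. by move=> H; apply: be_cat; [reflexivity | apply: be_cat; [exact H | reflexivity]]. Qed.

Lemma bctx0 p u u' : bq u u' -> bq (p ++ u) (p ++ u').
Proof. by move=> H; apply: be_cat; [reflexivity | exact H]. Qed.

Definition sg (k : nat) : nat * bool := (k, true).
Definition cw m := locked (map sg (iota 0 m)).

Lemma cwS m : cw m.+1 = cw m ++ [:: sg m].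
Proof. by rewrite /cw -!lock -addn1 iotaD map_cat. Qed.

Lemma comm_far j (ks : seq nat) : j.+1 < n ->
  all (fun k => (k.+1 < j) || (j.+1 < k)) ks -> all (fun k => k.+1 < n) ks ->
  bq (sg j :: map sg ks) (map sg ks ++ [:: sg j]).
Proof.
move=> Hj; elim: ks => [|k ks IH] /=; first by reflexivity.
case/andP=> Hk Hks /andP [Hkn Hksn].
transitivity (sg k :: sg j :: map sg ks).
  have H2 : bq [:: sg j; sg k] [:: sg k; sg j].
    case/orP: Hk => Hk.
    - by apply: be_sym; apply: be_comm.
    - by apply: be_comm.
  apply: (@be_cat n [:: sg j; sg k] [:: sg k; sg j] (map sg ks) (map sg ks) H2); reflexivity.
apply: (@be_cat n [:: sg k] [:: sg k] (sg j :: map sg ks) (map sg ks ++ [:: sg j])); first by reflexivity.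
exact: IH.
Qed.

Lemma all_iota_lt m (P : pred nat) : (forall k, k < m -> P k) -> all P (iota 0 m).
Proof. by move=> H; apply/allP => k; rewrite mem_iota add0n => /andP [_ ]; apply: H. Qed.

Lemma lemA m k : m < n -> k.+1 < m -> bq (cw m ++ [:: sg k]) (sg k.+1 :: cw m).
Proof.
elim: m k => [|m IH] k Hm Hk //.
rewrite cwS.
case: (ltnP k.+1 m) => Hkm.
- transitivity (cw m ++ [:: sg k] ++ [:: sg m]).
    rewrite -catA; apply: bctx0 => /=.
    by apply: be_sym; apply: be_comm => //; lia.
  rewrite catA; setoid_rewrite (IH k (ltnW Hm) Hkm); reflexivity.
- have Ek : k.+1 = m by lia.
  subst m; rewrite cwS -!catA /=.
  transitivity (cw k ++ [:: sg k.+1; sg k; sg k.+1]).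
    by apply: bctx0; apply: be_braid; lia.
  rewrite -(cat1s (sg k.+1) [:: sg k; sg k.+1]) catA.
  transitivity ((sg k.+1 :: cw k) ++ [:: sg k; sg k.+1]); last by reflexivity.
  apply: be_cat; last by reflexivity.
  apply: be_sym; rewrite /cw -lock; apply: comm_far; first by lia.
    by apply: all_iota_lt => i Hi; apply/orP; left; lia.
  by apply: all_iota_lt => i Hi; lia.
Qed.

Lemma far_cat j p r : j.+1 < n -> p < j ->
  bq (sg j :: cw p ++ r) (cw p ++ sg j :: r).
Proof.
move=> Hj Hp.
have H : bq (sg j :: cw p) (cw p ++ [:: sg j]).
  rewrite /cw -lock; apply: comm_far => //.
    by apply: all_iota_lt => i Hi; apply/orP; left; lia.
  by apply: all_iota_lt => i Hi; lia.
have -> : cw p ++ sg j :: r = (cw p ++ [:: sg j]) ++ r by rewrite -catA.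
have -> : sg j :: cw p ++ r = (sg j :: cw p) ++ r by [].
by apply: be_cat; [exact H | reflexivity].
Qed.

Lemma lemC p : p.+1 < n ->
  bq (cw p.+1 ++ cw p ++ [:: sg p]) (sg 0 :: cw p.+1 ++ cw p).
Proof.
elim: p => [|p IH] Hp; first by rewrite /cw -!lock /=; reflexivity.
have IH' := IH (ltnW Hp).
transitivity (cw p.+1 ++ (cw p ++ (sg p.+1 :: sg p :: [:: sg p.+1]))).
  have -> : cw p.+2 ++ cw p.+1 ++ [:: sg p.+1] = cw p.+1 ++ (sg p.+1 :: (cw p ++ (sg p :: [:: sg p.+1]))).
    by rewrite !cwS -?catA.
  apply: bctx0; apply: far_cat; lia.
transitivity (cw p.+1 ++ (cw p ++ (sg p :: sg p.+1 :: [:: sg p]))).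
  apply: bctx0; apply: bctx0; apply: be_sym; apply: be_braid; lia.
transitivity ((sg 0 :: cw p.+1 ++ cw p) ++ [:: sg p.+1; sg p]).
  have -> : cw p.+1 ++ (cw p ++ (sg p :: sg p.+1 :: [:: sg p])) = (cw p.+1 ++ cw p ++ [:: sg p]) ++ [:: sg p.+1; sg p].
    by rewrite ?cat_cons -?catA.
  by apply: be_cat; [exact IH' | reflexivity].
have -> : sg 0 :: cw p.+2 ++ cw p.+1 = [:: sg 0] ++ (cw p.+1 ++ (sg p.+1 :: (cw p ++ [:: sg p]))).
  by rewrite !cwS -?catA.
have -> : (sg 0 :: cw p.+1 ++ cw p) ++ [:: sg p.+1; sg p] = [:: sg 0] ++ (cw p.+1 ++ (cw p ++ (sg p.+1 :: [:: sg p]))).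
  by rewrite ?cat_cons -?catA.
apply: be_sym; apply: bctx0; apply: bctx0; apply: far_cat; lia.
Qed.

Fixpoint Deltak m : seq nat := if m is m'.+1 then iota 0 m' ++ Deltak m' else [::].
Definition Delta m := locked (map sg (Deltak m)).

Lemma DeltaS m : Delta m.+1 = cw m ++ Delta m.
Proof. by rewrite /Delta /cw -!lock /= map_cat. Qed.

Lemma Deltak_lt m : all (fun k => k.+2 <= m) (Deltak m).
Proof.
elim: m => [|m IH] //=; rewrite all_cat; apply/andP; split.
  by apply: all_iota_lt => i Hi; lia.
by apply: sub_all IH => k /=; lia.
Qed.

Lemma far_Delta j m r : j.+1 < n -> m <= j ->
  bq (sg j :: Delta m ++ r) (Delta m ++ sg j :: r).
Proof.
move=> Hj Hm.
have H : bq (sg j :: Delta m) (Delta m ++ [:: sg j]).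
  rewrite /Delta -lock; apply: comm_far => //.
    by apply: sub_all (Deltak_lt m) => k /= Hk; apply/orP; left; lia.
  by apply: sub_all (Deltak_lt m) => k /= Hk; lia.
have -> : Delta m ++ sg j :: r = (Delta m ++ [:: sg j]) ++ r by rewrite -catA.
have -> : sg j :: Delta m ++ r = (sg j :: Delta m) ++ r by [].
by apply: be_cat; [exact H | reflexivity].
Qed.

Lemma lemD m k : m < n -> k < m ->
  bq (Delta m.+1 ++ [:: sg k]) (sg (m.-1 - k) :: Delta m.+1).
Proof.
elim: m k => [|m IH] k Hm Hk //.
rewrite DeltaS.
case: (ltnP k m) => Hkm.
-
  transitivity (cw m.+1 ++ sg (m.-1 - k) :: Delta m.+1).
    rewrite -catA; apply: bctx0; apply: IH; lia.
  have -> : cw m.+1 ++ sg (m.-1 - k) :: Delta m.+1 = (cw m.+1 ++ [:: sg (m.-1 - k)]) ++ Delta m.+1.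
    by rewrite -catA.
  have -> : m.+1.-1 - k = (m.-1 - k).+1 by lia.
  apply: (@be_cat n _ (sg (m.-1 - k).+1 :: cw m.+1) _ (Delta m.+1)); last by reflexivity.
  by apply: lemA; lia.
- have Ek : k = m by lia.
  subst k; rewrite subnn.
  case: m IH Hm Hk Hkm => [|p] IH Hm Hk Hkm.
    by rewrite /Delta /cw -!lock /=; reflexivity.
  rewrite DeltaS.
  transitivity (cw p.+2 ++ cw p.+1 ++ sg p.+1 :: Delta p.+1).
    rewrite -!catA; apply: bctx0; apply: bctx0.
    apply: be_sym; move: (@far_Delta p.+1 p.+1 [::]); rewrite cats0; apply; lia.
  transitivity ((sg 0 :: cw p.+2 ++ cw p.+1) ++ Delta p.+1).
    have -> : cw p.+2 ++ cw p.+1 ++ sg p.+1 :: Delta p.+1 =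
              (cw p.+2 ++ cw p.+1 ++ [:: sg p.+1]) ++ Delta p.+1 by rewrite ?cat_cons -?catA.
    by apply: be_cat; [apply: lemC; lia | reflexivity].
  by rewrite cat_cons -catA; reflexivity.
Qed.

Lemma flip_letter k b : k.+1 < n ->
  bq (Delta n ++ [:: (k, b)]) ((n - k.+2, b) :: Delta n).
Proof.
move=> Hk.
have H : bq (Delta n ++ [:: sg k]) (sg (n - k.+2) :: Delta n).
  have E : n = (n.-1).+1 by lia.
  have := @lemD n.-1 k; rewrite -E.
  have -> : n.-1.-1 - k = n - k.+2 by lia.
  by apply; lia.
case: b; first exact: H.
set k' := n - k.+2.
have Hk' : k'.+1 < n by rewrite /k'; lia.
transitivity ([:: (k', false); (k', true)] ++ Delta n ++ [:: (k, false)]).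
  rewrite -[X in bq X _]cat0s; apply: be_cat; last by reflexivity.
  by apply: be_sym; apply: (@be_cancel n k' false).
transitivity ([:: (k', false)] ++ (Delta n ++ [:: (k, true)]) ++ [:: (k, false)]).
  rewrite -[[:: (k', false); (k', true)]]/([:: (k', false)] ++ [:: sg k']).
  rewrite -!catA; apply: bctx0; rewrite !catA; apply: be_cat; last by reflexivity.
  by apply: be_sym; exact: H.
rewrite -catA; apply: bctx0.
rewrite -[X in bq _ X]cats0; apply: bctx0.
exact: (@be_cancel n k true).
Qed.

Lemma flip_word beta : valid_braid n beta ->
  bq (Delta n ++ beta) (flipb n beta ++ Delta n).
Proof.
elim: beta => [|[k b] beta IH] /=; first by rewrite cats0; reflexivity.
case/andP=> Hk Hb.
transitivity ((Delta n ++ [:: (k, b)]) ++ beta); first by rewrite -catA; reflexivity.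
transitivity (((n - k.+2, b) :: Delta n) ++ beta).
  by apply: be_cat; [apply: flip_letter | reflexivity].
rewrite cat_cons; apply: (@be_cat n [:: (n - k.+2, b)] [:: (n - k.+2, b)]); first by reflexivity.
exact: IH.
Qed.

Definition binv (w : seq (nat * bool)) := rev [seq (s.1, ~~ s.2) | s <- w].

Lemma binv_cancel w : valid_braid n w -> bq (w ++ binv w) [::] /\ bq (binv w ++ w) [::].
Proof.
elim: w => [|[k b] w IH] /=; first by split; reflexivity.
case/andP=> Hk /IH [H1 H2].
rewrite /binv /= rev_cons -/(binv w) -cats1.
split.
- transitivity ([:: (k, b)] ++ (w ++ binv w) ++ [:: (k, ~~ b)]); first by rewrite -!catA; reflexivity.
  transitivity ([:: (k, b)] ++ [::] ++ [:: (k, ~~ b)]).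
    by apply: bctx0; apply: be_cat; [exact H1 | reflexivity].
  exact: be_cancel.
- transitivity (binv w ++ ([:: (k, ~~ b)] ++ [:: (k, b)]) ++ w); first by rewrite -!catA; reflexivity.
  transitivity (binv w ++ [::] ++ w); last by exact H2.
  apply: bctx0; apply: be_cat; last by reflexivity.
  by have := @be_cancel n k (~~ b) Hk; rewrite negbK.
Qed.

Lemma valid_Delta : valid_braid n (Delta n).
Proof.
rewrite /valid_braid /Delta -lock all_map.
have := Deltak_lt n; apply: sub_all => k /=; lia.
Qed.

Lemma valid_binv w : valid_braid n w -> valid_braid n (binv w).
Proof. by rewrite /valid_braid /binv all_rev all_map. Qed.

Lemma valid_cat w1 w2 : valid_braid n (w1 ++ w2) = valid_braid n w1 && valid_braid n w2.
Proof. by rewrite /valid_braid all_cat. Qed.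

End Braid.

Lemma cnjg_nil n (psi chi : 'I_n -> word n) :
  feqf (compw chi psi) (@gen n) -> feqf (compw psi chi) (@gen n) ->
  cnjg (@gen n) (@gen n) psi chi.
Proof. by move=> H1 H2; split => //; rewrite comp_genl comp_genr; apply: feq_refl. Qed.

Lemma cnjg_step n (A A' T T' psi chi : 'I_n -> word n) :
  cnjg A A' psi chi -> feqf (compw psi T') (compw T psi) ->
  cnjg (compw A T) (compw A' T') psi chi.
Proof.
case=> H1 H2 H3 H; split => //.
apply: (feq_trans (g := compw (compw psi A') T')); first by rewrite cwA; apply: feq_refl.
apply: (feq_trans (g := compw (compw A psi) T')); first by apply: comp_feq => //; apply: feq_refl.
apply: (feq_trans (g := compw A (compw psi T'))); first by rewrite cwA; apply: feq_refl.
apply: (feq_trans (g := compw A (compw T psi))); first by apply: comp_feq => //; apply: feq_refl.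
by rewrite cwA; apply: feq_refl.
Qed.

Lemma gauge_Phi n (E : nat -> bool) (tau taui : nat -> aut2) (t0 ti0 : aut2) :
  (forall i, feq2 (tau i) (gauge (E i) (E i.+1) t0)) ->
  (forall i, feq2 (taui i) (gauge (E i) (E i.+1) ti0)) ->
  forall beta, valid_braid n beta ->
  cnjg (Phi n tau taui beta) (Phi n (fun _ => t0) (fun _ => ti0) beta) (sgnE n E) (sgnE n E).
Proof.
move=> Ht Hti; elim=> [|s beta IH] /=.
  by move=> _; rewrite !Phi_nil; apply: cnjg_nil; rewrite sgn_inv; apply: feq_refl.
case/andP=> Hs Hb; rewrite !Phi_cons; apply: cnjg_step; first exact: IH.
rewrite /Tl; case: (s.2).
- exact: gauge_Tloc.
- exact: gauge_Tloc.
Qed.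

Definition swapA (t : aut2) : aut2 := (swapw t.2, swapw t.1).
Definition Prev n : 'I_n -> word n := fun j => gen (rev_ord j).
Arguments Prev : clear implicits.
Definition sw2 : 'I_2 -> word 2 := fun k => gen (if val k == 0 then ord_b else ord_a).

Lemma Prev_inv n : compw (Prev n) (Prev n) = @gen n.
Proof.
apply: functional_extensionality => j; rewrite /compw /Prev subst_gen1.
by rewrite rev_ordK.
Qed.

Lemma swapw_subst w : swapw w = subst sw2 w.
Proof. by elim: w => [|[k b] w IH] //=; rewrite /swapw /= -/(swapw w) IH subst_cons /sw2; case: b. Qed.

Lemma sw2_inv : compw sw2 sw2 = @gen 2.
Proof.
apply: functional_extensionality => k; rewrite /compw /sw2 subst_gen1.
by case: (I2_cases k) => ->.
Qed.

Lemma sw2_P2 t : compw sw2 (P2 (swapA t)) = compw (P2 t) sw2.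
Proof.
apply: functional_extensionality => k; rewrite /compw.
case: (I2_cases k) => -> /=; rewrite /sw2 subst_gen1 /P2 /pair2 /=.
- by rewrite swapw_subst subst_comp -/(compw sw2 sw2) sw2_inv subst_gen.
- by rewrite swapw_subst subst_comp -/(compw sw2 sw2) sw2_inv subst_gen.
Qed.

Lemma Prev_emb n i : i.+1 < n ->
  compw (Prev n) (emb n (n - i.+2)) = compw (emb n i) sw2.
Proof.
move=> Hi; apply: functional_extensionality => k.
have H0 : n - i.+2 < n by lia.
have H1 : n - i.+2 + 1 < n by lia.
case: (I2_cases k) => -> {k}; rewrite /compw /emb /sw2 /= subst_gen1 /= ?addn0 ?addn1.
- rewrite (xw_gen H0) subst_gen1 /Prev (xw_gen Hi) /gen; congr [:: (_, true)].
  by apply: val_inj => /=; lia.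
- have H1' : (n - i.+2).+1 < n by lia.
  rewrite (xw_gen H1') subst_gen1 /Prev (xw_gen (ltnW Hi)) /gen; congr [:: (_, true)].
  by apply: val_inj => /=; lia.
Qed.

Lemma Tloc_flip n i (t : aut2) : i.+1 < n ->
  feqf (compw (Prev n) (@Tloc n (n - i.+2) (swapA t))) (compw (@Tloc n i t) (Prev n)).
Proof.
move=> Hi.
have Hi' : (n - i.+2).+1 < n by lia.
have E1 : compw (compw (Prev n) (@Tloc n (n - i.+2) (swapA t))) (emb n (n - i.+2)) =
          compw (emb n i) (compw sw2 (P2 (swapA t))).
  by rewrite -cwA Tloc_emb // cwA Prev_emb // -cwA.
have E2 : compw (compw (@Tloc n i t) (Prev n)) (emb n (n - i.+2)) =
          compw (emb n i) (compw (P2 t) sw2).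
  by rewrite -cwA Prev_emb // cwA Tloc_emb // -cwA.
have key : forall k, compw (compw (Prev n) (@Tloc n (n - i.+2) (swapA t))) (emb n (n - i.+2)) k =
                     compw (compw (@Tloc n i t) (Prev n)) (emb n (n - i.+2)) k.
  by move=> k; rewrite E1 E2 sw2_P2.
move=> j.
case: (eqVneq (val j) (n - i.+2)) => [hj | hj1].
  have -> : j = Ordinal (ltnW Hi') by apply: val_inj.
  move: (key ord_a); rewrite /compw /emb /= addn0 (xw_gen (ltnW Hi')) !subst_gen1 => ->.
  reflexivity.
case: (eqVneq (val j) (n - i.+2).+1) => [hj | hj2].
  have -> : j = Ordinal Hi' by apply: val_inj.
  move: (key ord_b); rewrite /compw /emb /= addn1 (xw_gen Hi') !subst_gen1 => ->.
  reflexivity.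
rewrite /compw (Tloc_far _ hj1 hj2) subst_gen1 /Prev subst_gen1 Tloc_far //.
- reflexivity.
- have := ltn_ord j; move/eqP: hj2; move/eqP: hj1 => h1 h2 h3.
  rewrite /= in h1 h2; by apply/eqP => /= E; lia.
- have := ltn_ord j; move/eqP: hj2; move/eqP: hj1 => h1 h2 h3.
  rewrite /= in h1 h2; by apply/eqP => /= E; lia.
Qed.

Lemma flip_valid n beta : valid_braid n beta -> valid_braid n (flipb n beta).
Proof. by elim: beta => [|s b IH] //= /andP [H1 H2]; rewrite IH // andbT; lia. Qed.

Lemma flip_Phi n (t ti : aut2) beta : valid_braid n beta ->
  cnjg (Phi n (fun _ => t) (fun _ => ti) beta)
       (Phi n (fun _ => swapA t) (fun _ => swapA ti) (flipb n beta)) (Prev n) (Prev n).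
Proof.
elim: beta => [|s beta IH] /=.
  by move=> _; rewrite !Phi_nil; apply: cnjg_nil; rewrite Prev_inv; apply: feq_refl.
case/andP=> Hs Hb; rewrite !Phi_cons; apply: cnjg_step; first exact: IH.
rewrite /Tl /=; case: (s.2); exact: Tloc_flip.
Qed.

Lemma delta_conj n tau taui : local_rep n tau taui ->
  forall beta, valid_braid n beta ->
  cnjg (Phi n tau taui beta) (Phi n tau taui (flipb n beta))
       (Phi n tau taui (Delta n)) (Phi n tau taui (binv (Delta n))).
Proof.
move=> Hl beta Hb.
have HD := valid_Delta n.
have HDi := valid_binv HD.
have [C1 C2] := binv_cancel HD.
have Hf := flip_valid Hb.
split.
- move=> j; rewrite -Phi_cat; apply: (Hl _ [::] _ _ C1) => //.
  by rewrite valid_cat HD HDi.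
- move=> j; rewrite -Phi_cat; apply: (Hl _ [::] _ _ C2) => //.
  by rewrite valid_cat HD HDi.
- move=> j; rewrite -!Phi_cat; symmetry; apply: Hl; last exact: flip_word.
  + by rewrite valid_cat HD Hb.
  + by rewrite valid_cat HD Hf.
Qed.

Lemma subst_sgn n (E : 'I_n -> bool) w :
  subst (sgn E) w = map (fun l => (l.1, l.2 == E l.1)) w.
Proof.
elim: w => [|[j b] w IH] //=; rewrite subst_cons IH /sgn /=.
by case: b; case: (E j).
Qed.


Definition rrel n : rel (letter n) := fun l l' => l' != inv_letter l.

Lemma redb_sorted n (w : word n) : redb w = sorted (@rrel n) w.
Proof.
elim: w => [|l w IH] //; case: w IH => [|l' w] IH //.
have -> : redb (l :: l' :: w) = (l' != inv_letter l) && redb (l' :: w) by [].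
have -> : sorted (@rrel n) (l :: l' :: w) = rrel l l' && sorted (@rrel n) (l' :: w) by [].
by rewrite IH.
Qed.

Lemma redb_inv n (w : word n) : redb w -> redb (inv_word w).
Proof.
rewrite !redb_sorted /inv_word rev_sorted sorted_map.
have Hr : relpre (@inv_letter n) (fun z => (@rrel n)^~ z) =2 @rrel n.
  by move=> l l'; rewrite /relpre /rrel /= inv_letterK eq_sym.
by rewrite (eq_sorted Hr).
Qed.

Definition dl (x y : bool) (l : letter 2) : letter 2 :=
  (l.1, l.2 == (if val l.1 == 0 then x else y)).

Lemma dl_inv x y l : dl x y (inv_letter l) = inv_letter (dl x y l).
Proof. by case: l => k b; rewrite /dl /inv_letter /=; case: b; case: ifP; case: x; case: y. Qed.

Lemma dl_inj x y : injective (dl x y).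
Proof.
move=> [k b] [k' b'] [Ek Eb]; subst k'; congr (_, _).
by move: Eb; case: ifP; case: b; case: b'; case: x; case: y.
Qed.

Lemma redb_dl x y w : redb w -> redb (map (dl x y) w).
Proof.
rewrite !redb_sorted sorted_map.
have Hr : relpre (dl x y) (@rrel 2) =2 @rrel 2.
  by move=> l l'; rewrite /relpre /rrel /= -dl_inv (inj_eq (@dl_inj x y)).
by rewrite (eq_sorted Hr).
Qed.

Lemma inv_word_dl x y w : inv_word (map (dl x y) w) = map (dl x y) (inv_word w).
Proof. by rewrite /inv_word map_rev -!map_comp; congr rev; apply: eq_map => l /=; rewrite dl_inv. Qed.

Lemma gauge_eq x y (t : aut2) : gauge x y t =
  (map (dl x y) (if x then t.1 else inv_word t.1), map (dl x y) (if y then t.2 else inv_word t.2)).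
Proof.
rewrite /gauge /ofP /compw /dsig /= !subst_sgn1 /= !subst_sgn.
by rewrite /P2 /pair2 /=; case: x; case: y; rewrite /= ?cats0.
Qed.

Lemma reduced_gauge x y t : reducedw t.1 -> reducedw t.2 ->
  reducedw (gauge x y t).1 /\ reducedw (gauge x y t).2.
Proof.
rewrite !reducedP gauge_eq /= => H1 H2.
by split; apply: redb_dl; [case: x | case: y] => //; apply: redb_inv.
Qed.

Lemma dsig_comp x y x' y' : compw (dsig x y) (dsig x' y') = dsig (x' == x) (y' == y).
Proof.
apply: functional_extensionality => k.
rewrite /compw /dsig subst_sgn1 /sgn.
by case: (I2_cases k) => -> /=; [case: x'; case: x | case: y'; case: y].
Qed.

Lemma gauge_gauge x y x' y' t : gauge x y (gauge x' y' t) = gauge (x' == x) (y' == y) t.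
Proof.
rewrite {1}/gauge P2_gauge.
have -> : compw (dsig x y) (compw (compw (dsig x' y') (compw (P2 t) (dsig x' y'))) (dsig x y))
  = compw (compw (dsig x y) (dsig x' y')) (compw (P2 t) (compw (dsig x' y') (dsig x y))).
  by rewrite !cwA.
by rewrite !dsig_comp /gauge (eq_sym x) (eq_sym y).
Qed.

Definition backA (t : aut2) : aut2 := (rev t.1, rev t.2).

Lemma rev_inv_word n (w : word n) : rev (inv_word w) = inv_word (rev w).
Proof. by rewrite /inv_word map_rev. Qed.

Lemma backA_gauge x y t : backA (gauge x y t) = gauge x y (backA t).
Proof.
rewrite !gauge_eq /backA /= -!map_rev.
by case: x; case: y; rewrite /= ?rev_inv_word.
Qed.

Lemma P2_swapA t : P2 (swapA t) = compw sw2 (compw (P2 t) sw2).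
Proof.
apply: functional_extensionality => k; rewrite /compw.
by case: (I2_cases k) => -> /=; rewrite /sw2 subst_gen1 /P2 /pair2 /= swapw_subst.
Qed.

Lemma sw2_dsig x y : compw sw2 (dsig x y) = compw (dsig y x) sw2.
Proof.
apply: functional_extensionality => k; rewrite /compw /dsig /sw2 subst_sgn1 subst_gen1.
by case: (I2_cases k) => -> /=; rewrite /sgn /=; [case: x | case: y].
Qed.

Lemma swapA_gauge x y t : swapA (gauge x y t) = gauge y x (swapA t).
Proof.
rewrite -[swapA (gauge x y t)]ofP_P2 P2_swapA P2_gauge /gauge P2_swapA.
congr ofP.
rewrite !cwA sw2_dsig -[in LHS]cwA -[in RHS]cwA (sw2_dsig y x).
by [].
Qed.

Lemma inverseP t s : inverse_aut2 t s <->
  feqf (compw (P2 s) (P2 t)) (@gen 2) /\ feqf (compw (P2 t) (P2 s)) (@gen 2).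
Proof.
split => [H | [H1 H2] k]; last by split; [apply: H1 | apply: H2].
by split => k; case: (H k).
Qed.

Lemma inverse_sym t s : inverse_aut2 t s -> inverse_aut2 s t.
Proof. by move=> H k; case: (H k). Qed.

Lemma inverse_gauge x y t s : inverse_aut2 t s -> inverse_aut2 (gauge x y t) (gauge x y s).
Proof.
move/inverseP => [H1 H2]; apply/inverseP; rewrite !P2_gauge.
have key : forall u v, feqf (compw (P2 u) (P2 v)) (@gen 2) ->
  feqf (compw (compw (dsig x y) (compw (P2 u) (dsig x y))) (compw (dsig x y) (compw (P2 v) (dsig x y)))) (@gen 2).
  move=> u v H.
  have -> : compw (compw (dsig x y) (compw (P2 u) (dsig x y))) (compw (dsig x y) (compw (P2 v) (dsig x y)))
    = compw (dsig x y) (compw (compw (P2 u) (compw (dsig x y) (dsig x y))) (compw (P2 v) (dsig x y))).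
    by rewrite !cwA.
  rewrite /dsig sgn_inv comp_genr -/(dsig x y).
  apply: (feq_trans (g := compw (dsig x y) (compw (@gen 2) (dsig x y)))).
    by apply: comp_feq; [apply: feq_refl | rewrite cwA; apply: comp_feq => //; apply: feq_refl].
  by rewrite comp_genl /dsig sgn_inv; apply: feq_refl.
by split; apply: key.
Qed.

Lemma inverse_feq t t' s : inverse_aut2 t s -> feq2 t t' -> inverse_aut2 t' s.
Proof.
move/inverseP => [H1 H2] Ht; apply/inverseP; split.
- apply: feq_trans H1; apply: comp_feq; [apply: feq_refl | by apply: feq_sym].
- apply: feq_trans H2; apply: comp_feq; [by apply: feq_sym | apply: feq_refl].
Qed.

Lemma inverse_uniq t s s' : inverse_aut2 t s -> inverse_aut2 t s' -> feq2 s s'.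
Proof.
move/inverseP => [H1 H2] /inverseP [K1 K2].
rewrite /feq2 -[P2 s]comp_genr.
apply: (feq_trans (g := compw (P2 s) (compw (P2 t) (P2 s')))).
  by apply: comp_feq; [apply: feq_refl | apply: feq_sym].
rewrite cwA -[P2 s' in X in feqf _ X]comp_genl.
by apply: comp_feq; [exact: H1 | apply: feq_refl].
Qed.

Lemma feq2_red t s : feq2 t s -> reducedw t.1 -> reducedw t.2 -> reducedw s.1 -> reducedw s.2 -> t = s.
Proof.
move=> H h1 h2 h3 h4; case: t s H h1 h2 h3 h4 => [t1 t2] [s1 s2] H /= h1 h2 h3 h4.
congr (_, _); apply: free_eq_red => //.
- by have := H ord_a.
- by have := H ord_b.
Qed.

Definition base (g0 h0 : aut2) (b : bool) := if b then g0 else h0.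
Definition Fq g0 h0 b x y := gauge x y (base g0 h0 b).
Definition Sq g0 h0 (Q : quad) := exists b x y z, Q = (Fq g0 h0 b x y, Fq g0 h0 b y z).

Definition good (g0 h0 : aut2) :=
  [/\ inverse_aut2 g0 h0,
      [/\ reducedw g0.1, reducedw g0.2, reducedw h0.1 & reducedw h0.2],
      swapA g0 = gauge false false h0 /\ swapA h0 = gauge false false g0 &
      backA g0 = gauge false false g0 /\ backA h0 = gauge false false h0].

Section Generic.
Variables (g0 h0 : aut2).
Hypothesis Hg : good g0 h0.

Lemma red_Fq b x y : reducedw (Fq g0 h0 b x y).1 /\ reducedw (Fq g0 h0 b x y).2.
Proof.
case: Hg => _ [r1 r2 r3 r4] _ _.
by case: b; apply: reduced_gauge.
Qed.

Lemma inv_Fq b x y : inverse_aut2 (Fq g0 h0 b x y) (Fq g0 h0 (~~ b) x y).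
Proof.
case: Hg => Hi _ _ _; rewrite /Fq; case: b => /=; apply: inverse_gauge => //.
exact: inverse_sym.
Qed.

Lemma swap_base b : swapA (base g0 h0 b) = gauge false false (base g0 h0 (~~ b)).
Proof. by case: Hg => _ _ [s1 s2] _; case: b. Qed.

Lemma back_base b : backA (base g0 h0 b) = gauge false false (base g0 h0 b).
Proof. by case: Hg => _ _ _ [s1 s2]; case: b. Qed.

Lemma swapwK : involutive swapw.
Proof.
move=> w; rewrite /swapw -map_comp map_id_in // => [[k b]] _ /=.
rewrite /swap_letter /=; case: (I2_cases k) => -> //.
Qed.

Lemma S_step Q1 Q2 : sym_step Q1 Q2 -> Sq g0 h0 Q2 -> Sq g0 h0 Q1.
Proof.
move=> Hs [b [x [y [z EQ]]]]; subst Q2.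
case: Hs => [|[]] Hs.
- case: Hs => [[a1 a2 a3 a4] _ Hi1 Hi2] /=.
  exists (~~ b), x, y, z.
  case: Q1 a1 a2 a3 a4 Hi1 Hi2 => [A B] a1 a2 a3 a4 /= Hi1 Hi2.
  have [h1 h2] := red_Fq (~~ b) x y.
  have [h3 h4] := red_Fq (~~ b) y z.
  congr (_, _); apply: feq2_red => //.
  + apply: (inverse_uniq (t := Fq g0 h0 b x y)); first exact: inverse_sym.
    by have := inv_Fq b x y.
  + apply: (inverse_uniq (t := Fq g0 h0 b y z)); first exact: inverse_sym.
    by have := inv_Fq b y z.
- have -> : Q1 = swapQ (swapQ Q1).
    by case: Q1 {Hs} => [[A B] [C D]]; rewrite /swapQ /= !swapwK.
  rewrite -Hs.
  exists (~~ b), (~~ z), (~~ y), (~~ x).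
  rewrite /swapQ /= -/(swapA (Fq g0 h0 b y z)) -/(swapA (Fq g0 h0 b x y)).
  by rewrite /Fq !swapA_gauge !swap_base !gauge_gauge.
- have -> : Q1 = backQ (backQ Q1).
    by case: Q1 {Hs} => [[A B] [C D]]; rewrite /backQ /= !revK.
  rewrite -Hs.
  exists b, (~~ x), (~~ y), (~~ z).
  rewrite /backQ /= -/(backA (Fq g0 h0 b y z)) -/(backA (Fq g0 h0 b x y)).
  by rewrite /Fq !backA_gauge !back_base !gauge_gauge.
Qed.

Lemma S_equiv Q1 Q2 : sym_equiv Q1 Q2 -> Sq g0 h0 Q2 -> Sq g0 h0 Q1.
Proof. elim=> // Qa Qb Qc Hs _ IH HS; apply: S_step Hs (IH HS). Qed.

End Generic.

Definition stepP (g0 h0 : aut2) := forall b b' x w x' y' z,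
  Fq g0 h0 b x w = Fq g0 h0 b' x' y' ->
  exists v z', Fq g0 h0 b x v = Fq g0 h0 b' x' y' /\ Fq g0 h0 b' y' z = Fq g0 h0 b v z'.

Definition rq (t : aut2) : aut2 := (reduce t.1, reduce t.2).

Lemma feq2_rq t : feq2 t (rq t).
Proof. by move=> k; case: (I2_cases k) => -> /=; rewrite /P2 /pair2 /=; symmetry; apply: reduce_equiv. Qed.

Section Seq.
Variables (g0 h0 : aut2) (L : ltype).
Hypothesis Hg : good g0 h0.
Hypothesis Hst : stepP g0 h0.
Hypothesis Hl : forall Q, Q \in listed L -> Sq g0 h0 Q.

Lemma seq_struct (tau taui : nat -> aut2) :
  (forall i, inverse_aut2 (tau i) (taui i)) -> has_type L tau ->
  exists b (E : nat -> bool),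
    (forall i, feq2 (tau i) (Fq g0 h0 b (E i) (E i.+1))) /\
    (forall i, feq2 (taui i) (Fq g0 h0 (~~ b) (E i) (E i.+1))).
Proof.
move=> Hinv Ht.
have HS : forall i, Sq g0 h0 (rq (tau i), rq (tau i.+1)).
  move=> i; case: (Ht i) => Q HQ HE; exact: (S_equiv Hg HE (Hl HQ)).
have [b [x0 [w0 [z0 E0]]]] := HS 0.
have {E0} E0 : rq (tau 0) = Fq g0 h0 b x0 w0 := congr1 fst E0.
pose next i x := [exists z, (rq (tau i) == Fq g0 h0 b x true) && (rq (tau i.+1) == Fq g0 h0 b true z)].
pose E := fix E i := if i is i'.+1 then next i' (E i') else x0.
have key : forall i, (exists w, rq (tau i) = Fq g0 h0 b (E i) w) ->
    rq (tau i) = Fq g0 h0 b (E i) (E i.+1) /\ exists w, rq (tau i.+1) = Fq g0 h0 b (E i.+1) w.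
  move=> i [w Hw].
  have [b' [x' [y' [z' Eq]]]] := HS i.
  have Eq1 : rq (tau i) = Fq g0 h0 b' x' y' := congr1 fst Eq.
  have Eq2 : rq (tau i.+1) = Fq g0 h0 b' y' z' := congr1 snd Eq.
  have [v [z'' [K1 K2]]] := Hst z' (etrans (esym Hw) Eq1).
  have Ev : rq (tau i) = Fq g0 h0 b (E i) v by rewrite K1.
  have Ev' : rq (tau i.+1) = Fq g0 h0 b v z'' by rewrite Eq2 K2.
  rewrite /= /next.
  case: existsP => [[z /andP [/eqP Z1 /eqP Z2]] | Hn].
    by split => //; exists z.
  have Hv : v = false.
    case: v Ev Ev' {K1 K2} => // Ev Ev'; exfalso; apply: Hn; exists z''.
    by rewrite Ev Ev' !eqxx.
  subst v; split => //; by exists z''.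
have Hall : forall i, exists w, rq (tau i) = Fq g0 h0 b (E i) w.
  elim=> [|i IH]; first by exists w0.
  by case: (key i IH).
have HE : forall i, rq (tau i) = Fq g0 h0 b (E i) (E i.+1).
  by move=> i; case: (key i (Hall i)).
exists b, E; split => i.
- by move=> k; rewrite -HE; apply: feq2_rq.
- apply: (inverse_uniq (t := tau i)); first exact: Hinv.
  apply: (inverse_feq (t := Fq g0 h0 b (E i) (E i.+1))); first exact: inv_Fq.
  by move=> k; apply: feq_sym; rewrite -HE; apply: feq2_rq.
Qed.

End Seq.

Lemma main_generic g0 h0 L : good g0 h0 -> stepP g0 h0 ->
  (forall Q, Q \in listed L -> Sq g0 h0 Q) ->
  forall tau taui tau' taui' : nat -> aut2,
  (forall i, inverse_aut2 (tau i) (taui i)) -> (forall i, inverse_aut2 (tau' i) (taui' i)) ->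
  local_inf tau' taui' -> has_type L tau -> has_type L tau' ->
  forall n beta, valid_braid n beta -> iso_pres (Gpres n tau taui beta) (Gpres n tau' taui' beta).
Proof.
move=> Hg Hst Hl tau taui tau' taui' Hi Hi' Hloc Ht Ht' n beta Hb.
have [b [E [HE HEi]]] := seq_struct Hg Hst Hl Hi Ht.
have [b' [E' [HE' HEi']]] := seq_struct Hg Hst Hl Hi' Ht'.
rewrite !Gpres_Rel.
have C1 := @gauge_Phi n E tau taui (base g0 h0 b) (base g0 h0 (~~ b)) HE HEi beta Hb.
have C2 : forall beta', valid_braid n beta' ->
    cnjg (Phi n tau' taui' beta') (Phi n (fun _ => base g0 h0 b') (fun _ => base g0 h0 (~~ b')) beta')
         (sgnE n E') (sgnE n E').
  by move=> beta' Hb'; apply: gauge_Phi.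
case: (eqVneq b' b) => [Eb | Nb].
  subst b'.
  have C := conj_trans C1 (conj_sym (C2 beta Hb)).
  exact: conj_iso C.
have Eb' : b' = ~~ b by move: Nb; case: (b) => /=; case: (b').
subst b'.
have Hf := flip_valid Hb.
have C3 := flip_Phi (base g0 h0 b) (base g0 h0 (~~ b)) Hb.
have Hs1 : swapA (base g0 h0 b) = gauge false false (base g0 h0 (~~ b)).
  by case: Hg => _ _ [s1 s2] _; case: (b).
have Hs2 : swapA (base g0 h0 (~~ b)) = gauge false false (base g0 h0 (~~ ~~ b)).
  by case: Hg => _ _ [s1 s2] _; case: (b).
have C4 := @gauge_Phi n (fun _ => false) (fun _ => swapA (base g0 h0 b)) (fun _ => swapA (base g0 h0 (~~ b)))
   (base g0 h0 (~~ b)) (base g0 h0 (~~ ~~ b)).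
have C4' := C4 (fun i => eq_ind_r (fun t => feq2 t _) (feq_refl _) Hs1)
               (fun i => eq_ind_r (fun t => feq2 t _) (feq_refl _) Hs2) _ Hf.
have C5 := conj_sym (C2 _ Hf).
have C6 := conj_sym (delta_conj (Hloc n) Hb).
exact: conj_iso (conj_trans (conj_trans (conj_trans (conj_trans C1 C3) C4') C5) C6).
Qed.

Definition allb (f : bool -> bool) := f true && f false.
Definition exb (f : bool -> bool) := f true || f false.
Lemma allbP f : allb f -> forall b, f b.
Proof. by case/andP => H1 H2 []. Qed.
Lemma exbP f : exb f -> exists b, f b.
Proof. by case/orP => H; [exists true | exists false]. Qed.

Lemma stepP_dec g0 h0 :
  allb (fun b => allb (fun b' => allb (fun x => allb (fun w => allb (fun x' => allb (fun y' => allb (fun z =>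
     (Fq g0 h0 b x w == Fq g0 h0 b' x' y') ==>
     exb (fun v => exb (fun z' => (Fq g0 h0 b x v == Fq g0 h0 b' x' y') && (Fq g0 h0 b' y' z == Fq g0 h0 b v z')))))))))) ->
  stepP g0 h0.
Proof.
move=> H b b' x w x' y' z E.
move: (allbP (allbP (allbP (allbP (allbP (allbP (allbP H b) b') x) w) x') y') z).
rewrite E eqxx /= => /exbP [v /exbP [z' /andP [/eqP E1 /eqP E2]]].
by exists v, z'.
Qed.

Lemma Sq_dec g0 h0 L :
  all (fun Q => exb (fun b => exb (fun x => exb (fun y => exb (fun z => Q == (Fq g0 h0 b x y, Fq g0 h0 b y z)))))) (listed L) ->
  forall Q, Q \in listed L -> Sq g0 h0 Q.
Proof.
move/allP => H Q /H /exbP [b /exbP [x /exbP [y /exbP [z /eqP E]]]].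
by exists b, x, y, z.
Qed.

Lemma inverse_dec t s :
  [&& (reduce (subst (pair2 s.1 s.2) (pair2 t.1 t.2 ord_a)) == gen ord_a),
      (reduce (subst (pair2 t.1 t.2) (pair2 s.1 s.2 ord_a)) == gen ord_a),
      (reduce (subst (pair2 s.1 s.2) (pair2 t.1 t.2 ord_b)) == gen ord_b) &
      (reduce (subst (pair2 t.1 t.2) (pair2 s.1 s.2 ord_b)) == gen ord_b)] ->
  inverse_aut2 t s.
Proof.
case/and4P => /eqP E1 /eqP E2 /eqP E3 /eqP E4 k.
by case: (I2_cases k) => ->; split; apply: red_free; rewrite ?E1 ?E2 ?E3 ?E4 reduce_id.
Qed.

Definition gB := ([:: lbi], [:: la]).
Definition hB := ([:: lb], [:: lai]).

Lemma good_B : good gB hB.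
Proof.
split.
- by apply: inverse_dec; vm_compute.
- by split; vm_compute.
- by split; vm_compute.
- by split; vm_compute.
Qed.

Lemma step_B : stepP gB hB.
Proof. by apply: stepP_dec; vm_compute. Qed.

Lemma list_B : forall Q, Q \in listed TB -> Sq gB hB Q.
Proof. by apply: Sq_dec; vm_compute. Qed.

Definition gC := ([:: la; lbi; la], [:: la]).
Definition hC := ([:: lb], [:: lb; lai; lb]).

Lemma good_C : good gC hC.
Proof.
split.
- by apply: inverse_dec; vm_compute.
- by split; vm_compute.
- by split; vm_compute.
- by split; vm_compute.
Qed.

Lemma step_C : stepP gC hC.
Proof. by apply: stepP_dec; vm_compute. Qed.

Lemma list_C : forall Q, Q \in listed TC -> Sq gC hC Q.
Proof. by apply: Sq_dec; vm_compute. Qed.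

Definition gD := ([:: lai; lbi; la], [:: lb; lb; la]).
Definition hD := ([:: lb; la; la], [:: lb; lai; lbi]).

Lemma good_D : good gD hD.
Proof.
split.
- by apply: inverse_dec; vm_compute.
- by split; vm_compute.
- by split; vm_compute.
- by split; vm_compute.
Qed.

Lemma step_D : stepP gD hD.
Proof. by apply: stepP_dec; vm_compute. Qed.

Lemma list_D : forall Q, Q \in listed TD -> Sq gD hD Q.
Proof. by apply: Sq_dec; vm_compute. Qed.

Definition gA r : aut2 := (cnj r [:: lb], [:: la]).
Definition hA r : aut2 := ([:: lb], nseq r lbi ++ la :: nseq r lb).

Lemma cnjE r l : cnj r [:: l] = nseq r la ++ l :: nseq r lai.
Proof. by []. Qed.
Lemma cnjiE r l : cnji r [:: l] = nseq r lai ++ l :: nseq r la.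
Proof. by []. Qed.

Lemma inv_word_nseq n r (l : letter n) : inv_word (nseq r l) = nseq r (inv_letter l).
Proof. by rewrite /inv_word map_nseq rev_nseq. Qed.

Lemma inv_word_pal n r (l1 l2 l3 : letter n) :
  inv_word (nseq r l1 ++ l2 :: nseq r l3) = nseq r (inv_letter l3) ++ inv_letter l2 :: nseq r (inv_letter l1).
Proof. by rewrite inv_word_cat inv_word_cons !inv_word_nseq -catA. Qed.

Lemma rev_pal (T : Type) r (l1 l2 l3 : T) :
  rev (nseq r l1 ++ l2 :: nseq r l3) = nseq r l3 ++ l2 :: nseq r l1.
Proof. by rewrite rev_cat rev_cons rev_nseq -cats1 -catA rev_nseq. Qed.

Lemma map_pal (T U : Type) (f : T -> U) r l1 l2 l3 :
  map f (nseq r l1 ++ l2 :: nseq r l3) = nseq r (f l1) ++ f l2 :: nseq r (f l3).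
Proof. by rewrite map_cat /= !map_nseq. Qed.

Lemma inv_letter_neq n (l : letter n) : l != inv_letter l.
Proof. by case: l => k b; rewrite /inv_letter /= xpair_eqE eqxx /=; case: b. Qed.

Lemma redb_cons n (l : letter n) w :
  redb (l :: w) = (if w is l' :: _ then l' != inv_letter l else true) && redb w.
Proof. by []. Qed.

Lemma redb_nseq_cat n r (l : letter n) w : redb w ->
  (if w is l' :: _ then l' != inv_letter l else true) -> redb (nseq r l ++ w).
Proof.
move=> Hw Hh; elim: r => [|r IH] //.
have -> : nseq r.+1 l ++ w = l :: (nseq r l ++ w) by [].
rewrite redb_cons IH andbT.
by case: r {IH} => [|r] /=; [case: w Hw Hh | rewrite inv_letter_neq].
Qed.

Lemma redb_pal n r (l1 l2 l3 : letter n) :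
  l2 != inv_letter l1 -> l3 != inv_letter l2 -> redb (nseq r l1 ++ l2 :: nseq r l3).
Proof.
move=> H12 H23; apply: redb_nseq_cat => //.
rewrite redb_cons; apply/andP; split.
  by case: r.
by have := @redb_nseq_cat n r l3 [::] is_true_true is_true_true; rewrite cats0.
Qed.

Lemma dlTT w : map (dl true true) w = w.
Proof. by rewrite map_id_in // => [[k b]] _; rewrite /dl /=; case: ifP => _; case: b. Qed.

Lemma nseqSr (T : Type) r (x : T) : nseq r.+1 x = nseq r x ++ [:: x].
Proof. by rewrite -addn1 nseqD. Qed.

Lemma free_nseq_cancel n r (l : letter n) w :
  free_equiv (nseq r l ++ nseq r (inv_letter l) ++ w) w.
Proof.
elim: r w => [|r IH] w; first by reflexivity.
have -> : nseq r.+1 l ++ nseq r.+1 (inv_letter l) ++ w =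
          nseq r l ++ ([:: l; inv_letter l] ++ (nseq r (inv_letter l) ++ w)).
  by rewrite nseqSr -catA.
setoid_rewrite (cancelL [::] l); exact: IH.
Qed.

Lemma free_nseq_cancel' n r (l : letter n) w :
  free_equiv (nseq r (inv_letter l) ++ nseq r l ++ w) w.
Proof. by rewrite -{2}(inv_letterK l); apply: free_nseq_cancel. Qed.

Lemma subst_nseq1 n m (f : 'I_n -> word m) r l x :
  (if l.2 then f l.1 else inv_word (f l.1)) = [:: x] -> subst f (nseq r l) = nseq r x.
Proof. by move=> H; elim: r => [|r IH] //=; rewrite subst_cons /= H IH. Qed.

Lemma good_A r : good (gA r) (hA r).
Proof.
split.
- move=> k; case: (I2_cases k) => -> {k}; rewrite /pair2 /gA /hA /=; split.
  + rewrite cnjE subst_cat subst_cons /= (@subst_nseq1 _ _ _ r la lb) //.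
    rewrite (@subst_nseq1 _ _ _ r lai lbi) //.
    have -> : nseq r lb ++ (nseq r lbi ++ la :: nseq r lb) ++ nseq r lbi =
              nseq r lb ++ nseq r (inv_letter lb) ++ ([:: la] ++ (nseq r lb ++ nseq r (inv_letter lb) ++ [::])).
      by rewrite cats0 -!catA.
    setoid_rewrite (free_nseq_cancel r lb); setoid_rewrite (free_nseq_cancel r lb).
    by rewrite cats0; reflexivity.
  + by rewrite subst_cons /= ?cats0; reflexivity.
  + by rewrite subst_cons /= ?cats0; reflexivity.
  + rewrite subst_cat subst_cons /= (@subst_nseq1 _ _ _ r lbi lai) //.
    rewrite (@subst_nseq1 _ _ _ r lb la) // cnjE.
    have -> : nseq r lai ++ (nseq r la ++ lb :: nseq r lai) ++ nseq r la =
              nseq r (inv_letter la) ++ nseq r la ++ ([:: lb] ++ (nseq r (inv_letter la) ++ nseq r la ++ [::])).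
      by rewrite cats0 -!catA.
    setoid_rewrite (free_nseq_cancel' r la); setoid_rewrite (free_nseq_cancel' r la).
    by rewrite cats0; reflexivity.
- split; apply/reducedP.
  + by rewrite /gA cnjE; apply: redb_pal.
  + by [].
  + by [].
  + by rewrite /hA; apply: redb_pal.
- by rewrite /gA /hA !gauge_eq /swapA /swapw /= cnjE !inv_word_pal !map_pal /=; split; reflexivity.
- by rewrite /gA /hA !gauge_eq /backA /= cnjE !inv_word_pal !map_pal !rev_pal /=; split; reflexivity.
Qed.

Lemma list_A r : forall Q, Q \in listed (TA r) -> Sq (gA r) (hA r) Q.
Proof.
move=> Q; rewrite !inE => /or3P [] /eqP ->.
- exists true, true, true, true.
  by rewrite /Fq /= gauge_eq /= !dlTT.
- exists true, true, true, false.
  by rewrite /Fq /= !gauge_eq /= !dlTT /gA !cnjE !map_pal /=.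
- exists true, true, false, true.
  by rewrite /Fq /= !gauge_eq /= /gA !cnjE !cnjiE !inv_word_pal !map_pal /=.
Qed.

Lemma Fq_A_inj r b x w b' x' y' :
  Fq (gA r.+1) (hA r.+1) b x w = Fq (gA r.+1) (hA r.+1) b' x' y' -> [/\ b = b', x = x' & w = y'].
Proof.
rewrite /Fq !gauge_eq /gA /hA cnjE.
by case: b; case: b'; case: x; case: x'; case: w; case: y';
  rewrite ?inv_word_pal /= => E; (try by split); congruence.
Qed.

Lemma step_A r : stepP (gA r) (hA r).
Proof.
case: r => [|r]; first by apply: stepP_dec; vm_compute.
move=> b b' x w x' y' z E.
have [Eb Ex Ew] := Fq_A_inj E; subst b' x' y'.
by exists w, z.
Qed.

Theorem theorem4p5 (L : ltype) :
  (forall tau taui tau' taui' : nat -> aut2,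
     (forall i, inverse_aut2 (tau i) (taui i)) ->
     (forall i, inverse_aut2 (tau' i) (taui' i)) ->
     local_inf tau taui -> local_inf tau' taui' ->
     has_type L tau -> has_type L tau' ->
     forall (n : nat) (beta : seq (nat * bool)), valid_braid n beta ->
       iso_pres (Gpres n tau taui beta) (Gpres n tau' taui' beta))
  /\
  (forall (tau taui : nat -> aut2) (t ti : aut2),
     (forall i, inverse_aut2 (tau i) (taui i)) -> inverse_aut2 t ti ->
     local_inf tau taui -> local_inf (fun _ => t) (fun _ => ti) ->
     has_type L tau -> has_type L (fun _ => t) ->
     forall (n : nat) (beta : seq (nat * bool)), valid_braid n beta ->
       iso_pres (Gpres n tau taui beta) (Gpres n (fun _ => t) (fun _ => ti) beta)).
Proof.
have key : forall tau taui tau' taui' : nat -> aut2,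
     (forall i, inverse_aut2 (tau i) (taui i)) ->
     (forall i, inverse_aut2 (tau' i) (taui' i)) ->
     local_inf tau' taui' ->
     has_type L tau -> has_type L tau' ->
     forall (n : nat) (beta : seq (nat * bool)), valid_braid n beta ->
       iso_pres (Gpres n tau taui beta) (Gpres n tau' taui' beta).
  move=> tau taui tau' taui' H1 H2 H3 H4 H5 n beta Hb.
  case: L H4 H5 => [r|||] H4 H5.
  - exact: (main_generic (@good_A r) (@step_A r) (@list_A r) H1 H2 H3 H4 H5 Hb).
  - exact: (main_generic good_B step_B list_B H1 H2 H3 H4 H5 Hb).
  - exact: (main_generic good_C step_C list_C H1 H2 H3 H4 H5 Hb).
  - exact: (main_generic good_D step_D list_D H1 H2 H3 H4 H5 Hb).
split.
- by move=> tau taui tau' taui' Hi Hi' _ Hl'; apply: key.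
- move=> tau taui t ti Hi Ht _ Hl'; apply: key => //.
Qed.
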